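(* Let $\Lambda$ be a subshift over a finite alphabet $\Sigma$. Then its canonical pair $(\mathfrak L^-_\Lambda,\mathfrak L^+_\Lambda)$ is a $\lambda$-graph bisystem over the common alphabet $\Sigma$ which satisfies FPCC, and the subshift it presents (the unique subshift whose set of nonempty admissible words is $W_{\mathfrak L_\Lambda^+}=W_{\mathfrak L_\Lambda^-}$) is $\Lambda$ itself.
   Context: Subshift: nonempty closed $\Lambda\subset\Sigma^{\mathbb Z}$ with $\sigma(\Lambda)=\Lambda$, $\sigma((x_n))=(x_{n+1})$. Canonical pair: for integers $k<l$ and $x\in\Lambda$, $W_{k,l}(x)$ is the set of words $(\mu_{k+1},\dots,\mu_{l-1})\in\Sigma^{l-k-1}$ such that the sequence equal to $x_n$ for $n\le k$ and $n\ge l$ and to $\mu_n$ for $k<n<l$ lies in $\Lambda$. Write $[x]_{k,l}$ for the class of $x$ under $x\sim z\iff W_{k,l}(x)=W_{k,l}(z)$ and $\Omega^c_{k,l}$ for the (finite) set of classes; $\Omega^c_{-1,0}$ and $\Omega^c_{0,1}$ are singletons. Put $V_l:=\Omega^c_{-1,l}$ ($l\ge0$), and let $\theta_l:\Omega^c_{-l,1}\to\Omega^c_{-1,l}$ be the bijection $[x]_{-l,1}\mapsto[\sigma^{1-l}(x)]_{-1,l}$. $E^+_{l,l+1}$: for $u\in V_l$, $v\in V_{l+1}$, $\alpha\in\Sigma$ there is exactly one edge from $u$ to $v$ labeled $\alpha$ iff some $y\in\Lambda$ has $y_l=\alpha$, $[y]_{-1,l}=u$, $[y]_{-1,l+1}=v$,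 and no edge otherwise. $E^-_{l+1,l}$: for $v\in V_{l+1}$, $u\in V_l$, $\beta\in\Sigma$ there is exactly one edge from $v$ to $u$ labeled $\beta$ iff some $y\in\Lambda$ has $y_{-l}=\beta$, $\theta_{l+1}([y]_{-(l+1),1})=v$, $\theta_l([y]_{-l,1})=u$. $\mathfrak L^\pm_\Lambda=(V,E^\pm,\lambda^\pm)$ with the labels just described. $\lambda$-graph bisystem over $\Sigma^\pm$: vertex set $V=\bigsqcup_{l\ge0}V_l$, $V_l$ finite nonempty; edge sets $E^-=\bigsqcup E^-_{l+1,l}$ (edges from $V_{l+1}$ to $V_l$) and $E^+=\bigsqcup E^+_{l,l+1}$ (edges from $V_l$ to $V_{l+1}$), labelings $\lambda^\pm:E^\pm\to\Sigma^\pm$, with: (1) every $v\in V_l$, $l\ge1$, is terminal of an edge of $E^-_{l+1,l}$, source of an edge of $E^-_{l,l-1}$, source of an edge of $E^+_{l,l+1}$, terminal of an edge of $E^+_{l-1,l}$; each $v\in V_0$ is terminal of an edge of $E^-_{1,0}$ and source of one of $E^+_{0,1}$; (2) $\lambda^-$ right-resolving (same source and label implies same edge), $\lambda^+$ left-resolving (same terminal and label implies same edge); (3) local property: for $u\in V_l,v\in V_{l+2}$ a label-preserving bijection between $\{(e^-,e^+)\in E^-_{l+1,l}\times E^+_{l+1,l+2}:t(e^-)=u,s(e^-)=s(e^+),t(e^+)=v\}$ and $\{(f^+,f^-)\in E^+_{l,l+1}\times E^-_{l+2,l+1}:s(f^+)=u,t(f^+)=t(f^-),s(f^-)=v\}$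 (matching $\lambda^-$ of the $E^-$ components and $\lambda^+$ of the $E^+$ components). For $u\in V_l$: $F(u)$ = words $(\lambda^-(f_l),\dots,\lambda^-(f_1))$ along paths $f_k\in E^-_{k,k-1}$ from $u$ down to $V_0$; $P(u)$ = words $(\lambda^+(e_1),\dots,\lambda^+(e_l))$ along paths $e_k\in E^+_{k-1,k}$ from $V_0$ to $u$. FPCC: $|V_0|=1$, $\Sigma^-=\Sigma^+$, $F(u)=P(u)$ for all $u\in V_l,l\ge1$. $W_{\mathfrak L^+}$ (resp. $W_{\mathfrak L^-}$) is the set of label words of finite paths in $\mathfrak L^+$ (resp. in $\mathfrak L^-$, read in the direction of the edges). *)

(* Defs.v *)
From Stdlib Require Import ZArith ClassicalEpsilon.
From mathcomp Require Import all_boot.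
Set Implicit Arguments. Unset Strict Implicit. Unset Printing Implicit Defensive.

Definition classb (P : Prop) : bool :=
  if excluded_middle_informative P then true else false.

Section Subshift.
Variable Sigma : finType.
Definition zseq := Z -> Sigma.

Definition shiftZ (m : Z) (x : zseq) : zseq := fun n => x (n + m)%Z.
Definition shift (x : zseq) : zseq := shiftZ 1 x.

(* closed in the product topology of the discrete space Sigma *)
Definition closed_set (L : zseq -> Prop) : Prop :=
  forall x : zseq,
    (forall N : nat, exists y, L y /\ forall n : Z, (Z.abs n <= Z.of_nat N)%Z -> y n = x n) ->
    L x.

Definition is_subshift (L : zseq -> Prop) : Prop :=
  (exists x, L x) /\ closed_set L /\
  (forall x, L x -> L (shift x)) /\ (forall y, L y -> exists x, L x /\ shift x = y).

Definition admissible (L : zseq -> Prop) (w : seq Sigma) : Prop :=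
  w <> [::] /\ exists x, L x /\ exists n : Z,
    forall i : nat, (i < size w)%N -> x (n + Z.of_nat i)%Z = nth (x n) w i.

Definition fillZ (x : zseq) (k : Z) (n : nat) (t : n.-tuple Sigma) : zseq :=
  fun m => if (k <? m)%Z && (m <? k + Z.of_nat n + 1)%Z
           then nth (x m) (val t) (Z.to_nat (m - k - 1)) else x m.

(* Wset L k n x = W_{k,l}(x) with l = k + n + 1 *)
Definition Wset (L : zseq -> Prop) (k : Z) (n : nat) (x : zseq) : {set n.-tuple Sigma} :=
  [set t : n.-tuple Sigma | classb (L (fillZ x k t))].

(* Omega^c_{-1,l}: a class [x]_{-1,l} is represented by the set W_{-1,l}(x) that determines it *)
Definition canV (L : zseq -> Prop) (l : nat) : finType :=
  {S : {set l.-tuple Sigma} | classb (exists x, L x /\ Wset L (-1) l x = S)}.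
End Subshift.

(* Edges are represented by labeled triples (source, label, terminal); by the resolving
   conditions an edge is determined by such a triple. *)
Record LGB (Sm Sp : Type) := mkLGB {
  V : nat -> finType;
  Em : forall l, V l.+1 -> Sm -> V l -> Prop;
  Ep : forall l, V l -> Sp -> V l.+1 -> Prop
}.
Arguments V {Sm Sp}. Arguments Em {Sm Sp}. Arguments Ep {Sm Sp}.

Section LGBdefs.
Variables Sm Sp : Type.
Variable G : LGB Sm Sp.

Definition local_pairs_L (l : nat) (u : V G l) (v : V G l.+2) :=
  {p : V G l.+1 * Sm * Sp | Em G l p.1.1 p.1.2 u /\ Ep G l.+1 p.1.1 p.2 v}.
Definition local_pairs_R (l : nat) (u : V G l) (v : V G l.+2) :=
  {q : V G l.+1 * Sp * Sm | Ep G l u q.1.2 q.1.1 /\ Em G l.+1 v q.2 q.1.1}.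

Definition is_lambda_graph_bisystem : Prop :=
  (forall l, exists v : V G l, True) /\
  (forall l (v : V G l.+1),
     (exists w b, Em G l.+1 w b v) /\ (exists b u, Em G l v b u) /\
     (exists a w, Ep G l.+1 v a w) /\ (exists u a, Ep G l u a v)) /\
  (forall v : V G 0, (exists w b, Em G 0 w b v) /\ (exists a w, Ep G 0 v a w)) /\
  (forall l (v : V G l.+1) b (u1 u2 : V G l), Em G l v b u1 -> Em G l v b u2 -> u1 = u2) /\
  (forall l (v : V G l.+1) a (u1 u2 : V G l), Ep G l u1 a v -> Ep G l u2 a v -> u1 = u2) /\
  (forall l (u : V G l) (v : V G l.+2),
     exists phi : local_pairs_L u v -> local_pairs_R u v,
       bijective phi /\
       forall p, (proj1_sig (phi p)).2 = (proj1_sig p).1.2 /\ (proj1_sig (phi p)).1.2 = (proj1_sig p).2).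

Fixpoint Fw (l : nat) : V G l -> seq Sm -> Prop :=
  match l with
  | 0 => fun _ w => w = [::]
  | l'.+1 => fun u w => exists b (u' : V G l') w', Em G l' u b u' /\ Fw u' w' /\ w = b :: w'
  end.

Fixpoint Pw (l : nat) : V G l -> seq Sp -> Prop :=
  match l with
  | 0 => fun _ w => w = [::]
  | l'.+1 => fun u w => exists (u' : V G l') a w', Ep G l' u' a u /\ Pw u' w' /\ w = rcons w' a
  end.

Fixpoint pathP (w : seq Sp) (l : nat) (u : V G l) : Prop :=
  match w with
  | [::] => True
  | a :: w' => exists v : V G l.+1, Ep G l u a v /\ pathP w' v
  end.

Fixpoint pathM (w : seq Sm) (l : nat) : V G l -> Prop :=
  match w, l with
  | [::], _ => fun _ => True
  | _ :: _, 0 => fun _ => False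
  | b :: w', l'.+1 => fun u => exists v : V G l', Em G l' u b v /\ pathM w' v
  end.

Definition W_Lp (w : seq Sp) : Prop := w <> [::] /\ exists l (u : V G l), pathP w u.
Definition W_Lm (w : seq Sm) : Prop := w <> [::] /\ exists l (u : V G l), pathM w u.
End LGBdefs.

Definition FPCC (S : Type) (G : LGB S S) : Prop :=
  #|V G 0| = 1 /\ forall l (u : V G l.+1) w, Fw u w <-> Pw u w.

Section Canonical.
Variable Sigma : finType.
Variable L : zseq Sigma -> Prop.

Definition canEp (l : nat) (u : canV L l) (a : Sigma) (v : canV L l.+1) : Prop :=
  exists y, L y /\ y (Z.of_nat l) = a /\
    Wset L (-1) l y = val u /\ Wset L (-1) l.+1 y = val v.

(* edge v --beta--> u in E^-_{l+1,l}; theta_{l+1}([y]_{-(l+1),1}) = [sigma^{-l} y]_{-1,l+1}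
   and theta_l([y]_{-l,1}) = [sigma^{1-l} y]_{-1,l} *)
Definition canEm (l : nat) (v : canV L l.+1) (b : Sigma) (u : canV L l) : Prop :=
  exists y, L y /\ y (- Z.of_nat l)%Z = b /\
    Wset L (-1) l.+1 (shiftZ (- Z.of_nat l) y) = val v /\
    Wset L (-1) l (shiftZ (1 - Z.of_nat l) y) = val u.

Definition canonical_pair : LGB Sigma Sigma := mkLGB canEm canEp.
End Canonical.

(* Main.v *)
Require Import Defs.
From Stdlib Require Import ZArith ClassicalEpsilon ProofIrrelevance Lia.
From mathcomp Require Import all_boot zify.
Set Implicit Arguments. Unset Strict Implicit. Unset Printing Implicit Defensive.

Lemma classbP (P : Prop) : classb P = true <-> P.
Proof. rewrite /classb; case: excluded_middle_informative => //. Qed.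

Section Main.
Variable Sigma : finType.
Variable L : zseq Sigma -> Prop.
Hypothesis HL : is_subshift L.

Lemma L_ext x y : L x -> (forall n, x n = y n) -> L y.
Proof. move=> Lx e; case: HL => _ [Hc _]; apply: Hc => N; exists x; split=> // n _; exact: e. Qed.

Lemma L_shift1 x : L x -> L (shiftZ 1 x).
Proof. case: HL => _ [_ [H _]]; exact: H. Qed.

Lemma L_unshift x : L x -> L (shiftZ (-1) x).
Proof.
case: HL => _ [_ [_ H]] Lx; have [z [Lz e]] := H _ Lx.
apply: (L_ext Lz) => n; rewrite -e /shift /shiftZ; congr z; lia.
Qed.

Lemma L_shiftZ m x : L x -> L (shiftZ m x).
Proof.
move=> Lx.
have Hp : forall k : nat, L (shiftZ (Z.of_nat k) x) /\ L (shiftZ (- Z.of_nat k) x).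
  elim=> [|k [IH1 IH2]].
    split; apply: (L_ext Lx) => n; rewrite /shiftZ; congr x; lia.
  split.
    apply: (L_ext (L_shift1 IH1)) => n; rewrite /shiftZ; congr x; lia.
  apply: (L_ext (L_unshift IH2)) => n; rewrite /shiftZ; congr x; lia.
have [k [-> | ->]] : exists k : nat, m = Z.of_nat k \/ m = (- Z.of_nat k)%Z.
  exists (Z.abs_nat m); lia.
  exact: (Hp k).1.
exact: (Hp k).2.
Qed.

Definition fs (x : zseq Sigma) (s : seq Sigma) : zseq Sigma :=
  fun m => if (0 <=? m)%Z && (m <? Z.of_nat (size s))%Z then nth (x m) s (Z.to_nat m) else x m.

Lemma fill_fs n x (t : n.-tuple Sigma) m : fillZ x (-1) t m = fs x t m.
Proof.
rewrite /fillZ /fs size_tuple.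
case: (Z.ltb_spec (-1) m) => h1; case: (Z.ltb_spec m _) => h2;
case: (Z.leb_spec 0 m) => h3; case: (Z.ltb_spec m (Z.of_nat n)) => h4 //=; try lia.
congr nth; lia.
Qed.

Lemma fs_out x s m : (m < 0 \/ Z.of_nat (size s) <= m)%Z -> fs x s m = x m.
Proof.
rewrite /fs => h; case: (Z.leb_spec 0 m) => h3; case: (Z.ltb_spec m _) => h4 //=; lia.
Qed.

Lemma fs_in x s (i : nat) d : i < size s -> fs x s (Z.of_nat i) = nth d s i.
Proof.
rewrite /fs => h; case: (Z.leb_spec 0 _) => h3; case: (Z.ltb_spec _ _) => h4 //=; try lia.
rewrite Nat2Z.id; exact: set_nth_default.
Qed.

Definition Wn n x := Wset L (-1) n x.

Definition memS n (S : {set n.-tuple Sigma}) (s : seq Sigma) : Prop :=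
  exists t, t \in S /\ val t = s.

Lemma memW n x s : memS (Wn n x) s <-> size s = n /\ L (fs x s).
Proof.
split.
  case=> t [ht <-]; split; first exact: size_tuple.
  move: ht; rewrite inE => /classbP Lt; apply: (L_ext Lt) => m; exact: fill_fs.
case=> hs Ls; have hs' : size s == n by apply/eqP.
exists (Tuple hs'); split=> //; rewrite inE; apply/classbP.
apply: (L_ext Ls) => m; by rewrite fill_fs.
Qed.

Lemma set_memS n (S1 S2 : {set n.-tuple Sigma}) :
  (forall s, memS S1 s <-> memS S2 s) -> S1 = S2.
Proof.
move=> H; apply/setP => t; apply/idP/idP => h.
  have [t' [h' e]] := proj1 (H (val t)) (ex_intro _ t (conj h erefl)).
  by rewrite -(val_inj e).
have [t' [h' e]] := proj2 (H (val t)) (ex_intro _ t (conj h erefl)).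
by rewrite -(val_inj e).
Qed.

Lemma W_ext n x y : (forall m, x m = y m) -> Wn n x = Wn n y.
Proof.
move=> e; apply: set_memS => s; rewrite !memW.
have e' : forall m, fs x s m = fs y s m by move=> m; rewrite /fs !e.
split=> -[hs Ls]; split=> //; apply: (L_ext Ls) => m; by rewrite e'.
Qed.

Lemma W_agree n x y : (forall m, (m < 0 \/ Z.of_nat n <= m)%Z -> x m = y m) -> Wn n x = Wn n y.
Proof.
move=> e; apply: set_memS => s; rewrite !memW.
have e' : size s = n -> forall m, fs x s m = fs y s m.
  move=> hs m; rewrite /fs; case: (Z.leb_spec 0 m) => h3; case: (Z.ltb_spec m _) => h4 /=;
  try (apply: e; lia). apply: set_nth_default; lia.
split=> -[hs Ls]; split=> //; apply: (L_ext Ls) => m; by rewrite e'.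
Qed.

Definition pref (x : zseq Sigma) n := mkseq (fun i => x (Z.of_nat i)) n.

Lemma W_self n x : L x -> memS (Wn n x) (pref x n).
Proof.
move=> Lx; apply/memW; split; first by rewrite size_mkseq.
apply: (L_ext Lx) => m; rewrite /fs size_mkseq.
case: (Z.leb_spec 0 m) => h3; case: (Z.ltb_spec m _) => h4 //=.
rewrite nth_mkseq; last lia. congr x; lia.
Qed.

Lemma W_rcons l x s : memS (Wn l x) s <-> memS (Wn l.+1 x) (rcons s (x (Z.of_nat l))).
Proof.
rewrite !memW size_rcons.
have e : size s = l -> forall m, fs x s m = fs x (rcons s (x (Z.of_nat l))) m.
  move=> hs m; rewrite /fs size_rcons.
  case: (Z.leb_spec 0 m) => h3; case: (Z.ltb_spec m (Z.of_nat (size s))) => h4;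
  case: (Z.ltb_spec m (Z.of_nat (size s).+1)) => h5 //=; try lia.
    rewrite nth_rcons; case: ltnP => h6; last lia. by [].
  rewrite nth_rcons; case: ltnP => h6; first lia.
  rewrite ifT; last (apply/eqP; lia). congr x; lia.
split=> -[hs Ls]; (split; first lia); apply: (L_ext Ls) => m; rewrite e //; lia.
Qed.

Lemma W_cons l x s : L x ->
  memS (Wn l (shiftZ 1 x)) s <-> memS (Wn l.+1 x) (x 0%Z :: s).
Proof.
move=> Lx; rewrite !memW /=.
have e : forall m, shiftZ 1 (fs x (x 0%Z :: s)) m = fs (shiftZ 1 x) s m.
  move=> m; rewrite /fs /shiftZ /=.
  case: (Z.leb_spec 0 m) => h3; case: (Z.ltb_spec m (Z.of_nat (size s))) => h4;
  case: (Z.leb_spec 0 (m+1)) => h5; case: (Z.ltb_spec (m+1) (Z.of_nat (size s).+1)) => h6 //=; try lia.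
    have -> : Z.to_nat (m + 1) = (Z.to_nat m).+1 by lia. by [].
  have -> : m = (-1)%Z by lia. by [].
split=> -[hs Ls]; (split; first lia).
  have := L_shiftZ (-1) Ls => L2; apply: (L_ext L2) => m.
  have := e (m + -1)%Z; rewrite /shiftZ => <-; congr fs; lia.
have := L_shiftZ 1 Ls => L2; apply: (L_ext L2) => m; by rewrite e.
Qed.


Definition mkV l x (Lx : L x) : canV L l :=
  @exist _ _ (Wn l x) (proj2 (classbP _) (ex_intro _ x (conj Lx erefl))).

Lemma canV_rep l (u : canV L l) : exists x, L x /\ Wn l x = val u.
Proof. by have /classbP := valP u. Qed.

Lemma Ep_of l x (u : canV L l) (v : canV L l.+1) : L x -> val u = Wn l x -> val v = Wn l.+1 x ->
  canEp u (x (Z.of_nat l)) v.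
Proof. by move=> Lx hu hv; exists x. Qed.

Lemma Em_of l x (v : canV L l.+1) (u : canV L l) : L x -> val v = Wn l.+1 x ->
  val u = Wn l (shiftZ 1 x) -> canEm v (x 0%Z) u.
Proof.
move=> Lx hv hu; exists (shiftZ (Z.of_nat l) x); split; first exact: L_shiftZ.
split; first by rewrite /shiftZ; congr x; lia.
split.
  rewrite hv; apply: W_ext => m; rewrite /shiftZ; congr x; lia.
rewrite hu; apply: W_ext => m; rewrite /shiftZ; congr x; lia.
Qed.

Lemma EpC1 l (u : canV L l) a (v : canV L l.+1) : canEp u a v ->
  (exists s, memS (val v) (rcons s a)) /\ (forall s, memS (val u) s <-> memS (val v) (rcons s a)).
Proof.
case=> y [Ly [ya [Wu Wv]]]; subst a; rewrite -Wu -Wv; split.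
  exists (pref y l); apply: (proj1 (W_rcons _ _ _)); exact: W_self.
move=> s; exact: W_rcons.
Qed.

Lemma Ep_exists l (v : canV L l.+1) s a : memS (val v) (rcons s a) -> exists u, canEp u a v.
Proof.
move=> hs; have [x [Lx Wx]] := canV_rep v; move: hs; rewrite -Wx => /memW [hs Ly].
move: hs; rewrite size_rcons => -[hs].
exists (mkV l Ly).
have ha : fs x (rcons s a) (Z.of_nat l) = a.
  rewrite (@fs_in x _ l a); last by rewrite size_rcons; lia.
  by rewrite nth_rcons hs ltnn eqxx.
have H := @Ep_of l _ (mkV l Ly) v Ly erefl; rewrite ha in H; apply: H; rewrite -Wx; apply: W_agree => m hm; rewrite fs_out // size_rcons; lia.
Qed.

Lemma Ep_res l (v : canV L l.+1) a (u1 u2 : canV L l) : canEp u1 a v -> canEp u2 a v -> u1 = u2.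
Proof.
move=> /EpC1 [_ H1] /EpC1 [_ H2]; apply: val_inj; apply: set_memS => s; by rewrite H1 H2.
Qed.

Lemma EpC l (u : canV L l) a (v : canV L l.+1) : canEp u a v <->
  (exists s, memS (val v) (rcons s a)) /\ (forall s, memS (val u) s <-> memS (val v) (rcons s a)).
Proof.
split; first exact: EpC1.
case=> -[s hs] H; have [u' Hu'] := Ep_exists hs.
have [_ H'] := EpC1 Hu'.
have -> // : u = u'; apply: val_inj; apply: set_memS => s'; by rewrite H H'.
Qed.

Lemma EmC1 l (w : canV L l.+1) b (u : canV L l) : canEm w b u ->
  (exists s, memS (val w) (b :: s)) /\ (forall s, memS (val u) s <-> memS (val w) (b :: s)).
Proof.
case=> y [Ly [yb [Wv Wu]]].
have Lx := L_shiftZ (- Z.of_nat l) Ly.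
have ex : forall m, shiftZ (1 - Z.of_nat l) y m = shiftZ 1 (shiftZ (- Z.of_nat l) y) m.
  move=> m; rewrite /shiftZ; congr y; lia.
have xb : shiftZ (- Z.of_nat l) y 0%Z = b by rewrite -yb /shiftZ; congr y; lia.
rewrite -Wv -Wu; rewrite -/(Wn l.+1 _) -/(Wn l _) (W_ext _ ex) -xb; split.
  exists (pref (shiftZ 1 (shiftZ (- Z.of_nat l) y)) l); apply: (proj1 (W_cons _ _ _)) => //.
  apply: W_self; exact: L_shiftZ.
move=> s; exact: W_cons.
Qed.

Lemma Em_exists l (w : canV L l.+1) b s : memS (val w) (b :: s) -> exists u, canEm w b u.
Proof.
move=> hs; have [x [Lx Wx]] := canV_rep w; move: hs; rewrite -Wx => /memW [hs Ly].
exists (mkV l (L_shiftZ 1 Ly)).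
have hb : fs x (b :: s) 0%Z = b by rewrite (@fs_in x _ 0 b) //.
have H := @Em_of l _ w (mkV l (L_shiftZ 1 Ly)) Ly; rewrite hb in H; apply: H => //; rewrite -Wx; apply: W_agree => m hm; rewrite fs_out //; lia.
Qed.

Lemma Em_res l (v : canV L l.+1) b (u1 u2 : canV L l) : canEm v b u1 -> canEm v b u2 -> u1 = u2.
Proof.
move=> /EmC1 [_ H1] /EmC1 [_ H2]; apply: val_inj; apply: set_memS => s; by rewrite H1 H2.
Qed.

Lemma EmC l (w : canV L l.+1) b (u : canV L l) : canEm w b u <->
  (exists s, memS (val w) (b :: s)) /\ (forall s, memS (val u) s <-> memS (val w) (b :: s)).
Proof.
split; first exact: EmC1.
case=> -[s hs] H; have [u' Hu'] := Em_exists hs.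
have [_ H'] := EmC1 Hu'.
have -> // : u = u'; apply: val_inj; apply: set_memS => s'; by rewrite H H'.
Qed.


Lemma memS_size n (S : {set n.-tuple Sigma}) s : memS S s -> size s = n.
Proof. case=> t [_ <-]; exact: size_tuple. Qed.

Lemma V0_mem (u : canV L 0) s : memS (val u) s <-> s = [::].
Proof.
have [x [Lx Wx]] := canV_rep u; rewrite -Wx memW; split.
  by case=> /size0nil.
move=> ->; split=> //; apply: (L_ext Lx) => m; by rewrite fs_out //=; lia.
Qed.

Lemma V0_all (u1 u2 : canV L 0) : u1 = u2.
Proof. apply: val_inj; apply: set_memS => s; by rewrite !V0_mem. Qed.

Lemma FwC l (u : canV L l) w : @Fw _ _ (canonical_pair L) l u w <-> memS (val u) w.
Proof.
elim: l u w => [|l IH] u w /=; first by rewrite V0_mem.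
split.
  case=> b [u' [w' [He [Hf ->]]]]; have [_ H] := EmC1 He.
  exact: (proj1 (H w') (proj1 (IH u' w') Hf)).
case: w => [|b w'] hw; first by have := memS_size hw.
have [u' He] := Em_exists hw; exists b, u', w'; split=> //; split=> //.
have [_ H] := EmC1 He; apply/IH; exact/H.
Qed.

Lemma PwC l (u : canV L l) w : @Pw _ _ (canonical_pair L) l u w <-> memS (val u) w.
Proof.
elim: l u w => [|l IH] u w /=; first by rewrite V0_mem.
split.
  case=> u' [a [w' [He [Hf ->]]]]; have [_ H] := EpC1 He.
  exact: (proj1 (H w') (proj1 (IH u' w') Hf)).
case/lastP: w => [|w' a] hw; first by have := memS_size hw.
have [u' He] := Ep_exists hw; exists u', a, w'; split=> //; split=> //.
have [_ H] := EpC1 He; apply/IH; exact/H.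
Qed.

Lemma hasEmIn n (v : canV L n) : exists (w : canV L n.+1) b, canEm w b v.
Proof.
have [x [Lx Wx]] := canV_rep v; have Lx' := L_shiftZ (-1) Lx.
exists (mkV n.+1 Lx'), (shiftZ (-1) x 0%Z); apply: Em_of => //.
rewrite -Wx; apply: W_ext => m; rewrite /shiftZ; congr x; lia.
Qed.

Lemma hasEpOut n (v : canV L n) : exists a (w : canV L n.+1), canEp v a w.
Proof.
have [x [Lx Wx]] := canV_rep v.
by exists (x (Z.of_nat n)), (mkV n.+1 Lx); apply: Ep_of.
Qed.

Section Local.
Variables (l : nat) (u : canV L l) (v : canV L l.+2).
Let Q b a := (exists s, memS (val v) (b :: rcons s a)) /\
  (forall s, memS (val u) s <-> memS (val v) (b :: rcons s a)).

Lemma charL (w : canV L l.+1) b a : canEm w b u -> canEp w a v -> Q b a.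
Proof.
move=> /EmC1 [[s0 h0] Hu] /EpC1 [_ Hw]; split.
  exists s0; exact/(Hw (b :: s0)).
move=> s; rewrite Hu Hw //.
Qed.

Lemma charR (w : canV L l.+1) b a : canEp u a w -> canEm v b w -> Q b a.
Proof.
move=> /EpC1 [[s0 h0] Hu] /EmC1 [_ Hw]; split.
  exists s0; exact/(Hw (rcons s0 a)).
move=> s; rewrite Hu Hw //.
Qed.

Lemma dirL b a : Q b a -> exists w : canV L l.+1, canEm w b u /\ canEp w a v.
Proof.
case=> -[s0 h0] H.
have [w He] := @Ep_exists l.+1 v (b :: s0) a h0.
have [_ Hw] := EpC1 He; exists w; split=> //.
apply/EmC; split.
  by exists s0; apply/Hw.
move=> s; rewrite H Hw //.
Qed.

Lemma dirR b a : Q b a -> exists w : canV L l.+1, canEp u a w /\ canEm v b w.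
Proof.
case=> -[s0 h0] H.
have [w He] := @Em_exists l.+1 v b (rcons s0 a) h0.
have [_ Hw] := EmC1 He; exists w; split=> //.
apply/EpC; split.
  by exists s0; apply/Hw.
move=> s; rewrite H Hw //.
Qed.

Definition LP := @local_pairs_L _ _ (canonical_pair L) l u v.
Definition RP := @local_pairs_R _ _ (canonical_pair L) l u v.

Lemma LP_eq (p q : LP) : (proj1_sig p).1.2 = (proj1_sig q).1.2 -> (proj1_sig p).2 = (proj1_sig q).2 -> p = q.
Proof.
move: p q => [[[w1 b1] a1] [h1 h1']] [[[w2 b2] a2] [h2 h2']] /= eb ea; subst.
have ew := Ep_res h1' h2'; move: ew => /= ew; subst w2; f_equal; apply: proof_irrelevance.
Qed.

Lemma RP_eq (p q : RP) : (proj1_sig p).1.2 = (proj1_sig q).1.2 -> (proj1_sig p).2 = (proj1_sig q).2 -> p = q.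
Proof.
move: p q => [[[w1 a1] b1] [h1 h1']] [[[w2 a2] b2] [h2 h2']] /= eb ea; subst.
have ew := Em_res h1' h2'; move: ew => /= ew; subst w2; f_equal; apply: proof_irrelevance.
Qed.

Lemma phiE (p : LP) : {q : RP | (proj1_sig q).2 = (proj1_sig p).1.2 /\ (proj1_sig q).1.2 = (proj1_sig p).2}.
Proof.
move: p => [[[w b] a] /= [h1 h2]].
have [w' [e1 e2]] := constructive_indefinite_description _ (dirR (charL h1 h2)).
by exists (exist _ (w', a, b) (conj e1 e2)).
Defined.

Lemma psiE (q : RP) : {p : LP | (proj1_sig q).2 = (proj1_sig p).1.2 /\ (proj1_sig q).1.2 = (proj1_sig p).2}.
Proof.
move: q => [[[w a] b] /= [h1 h2]].
have [w' [e1 e2]] := constructive_indefinite_description _ (dirL (charR h1 h2)).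
by exists (exist _ (w', b, a) (conj e1 e2)).
Defined.

Lemma local_prop : exists phi : LP -> RP, bijective phi /\
  forall p, (proj1_sig (phi p)).2 = (proj1_sig p).1.2 /\ (proj1_sig (phi p)).1.2 = (proj1_sig p).2.
Proof.
exists (fun p => proj1_sig (phiE p)); split; last by move=> p; case: (phiE p).
exists (fun q => proj1_sig (psiE q)).
  move=> p; have [e1 e2] := proj2_sig (phiE p).
  have [e3 e4] := proj2_sig (psiE (proj1_sig (phiE p))).
  apply: LP_eq; congruence.
move=> q; have [e1 e2] := proj2_sig (psiE q).
have [e3 e4] := proj2_sig (phiE (proj1_sig (psiE q))).
apply: RP_eq; congruence.
Qed.
End Local.


Lemma pathP_up w l (u : canV L l) : @Defs.pathP _ _ (canonical_pair L) w l u ->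
  exists n (v : canV L n), forall s, memS (val u) s <-> memS (val v) (s ++ w).
Proof.
elim: w l u => [|a w IH] l u /=.
  by move=> _; exists l, u => s; rewrite cats0.
case=> v [he hp]; have [n [v' H]] := IH _ _ hp; exists n, v' => s.
have [_ Hu] := EpC1 he; rewrite Hu H cat_rcons //.
Qed.

Lemma up_path w k z (Lz : L z) :
  (forall i, i < size w -> z (Z.of_nat (k + i)) = nth (z 0%Z) w i) ->
  @Defs.pathP _ _ (canonical_pair L) w k (mkV k Lz).
Proof.
elim: w k => [|a w IH] k //= h; exists (mkV k.+1 Lz); split.
  have <- : z (Z.of_nat k) = a by have := h 0 erefl; rewrite addn0.
  exact: Ep_of.
apply: IH => i hi; rewrite addSnnS (h i.+1) //.
Qed.

Lemma pathM_down w l (u : canV L l) : @pathM _ _ (canonical_pair L) w l u ->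
  exists n (v : canV L n), forall s, memS (val v) s <-> memS (val u) (w ++ s).
Proof.
elim: w l u => [|b w IH] l u /=; first by move=> _; exists l, u.
case: l u => [|l] u //=.
case=> v [he hp]; have [n [v' H]] := IH _ _ hp; exists n, v' => s.
have [_ Hu] := EmC1 he; rewrite H Hu //.
Qed.

Lemma down_path w z (Lz : L z) :
  (forall i, i < size w -> z (Z.of_nat i) = nth (z 0%Z) w i) ->
  @pathM _ _ (canonical_pair L) w (size w) (mkV (size w) Lz).
Proof.
elim: w z Lz => [|b w IH] z Lz h //=; exists (mkV (size w) (L_shiftZ 1 Lz)); split.
  have <- : z 0%Z = b by have := h 0 erefl.
  exact: Em_of.
apply: IH => i hi; rewrite /shiftZ.
have -> : (Z.of_nat i + 1)%Z = Z.of_nat i.+1 by lia.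
rewrite (h i.+1) //=; exact: set_nth_default.
Qed.

Lemma WLp_iff w : W_Lp (canonical_pair L) w <-> admissible L w.
Proof.
split.
  case=> hne [l [u hp]]; split=> //.
  have [n [v H]] := pathP_up hp.
  have [x [Lx Wx]] := canV_rep u.
  have hs : memS (val u) (pref x l) by rewrite -Wx; exact: W_self.
  have := proj1 (H _) hs; have [z [Lz Wz]] := canV_rep v.
  rewrite -Wz => /memW [hsz Ly].
  exists (fs z (pref x l ++ w)); split=> //; exists (Z.of_nat (size (pref x l))) => i hi.
  rewrite -Nat2Z.inj_add (@fs_in _ _ _ (fs z (pref x l ++ w) (Z.of_nat (size (pref x l))))); last first.
    rewrite size_cat; lia.
  by rewrite nth_cat ltnNge leq_addr /= addKn.
case=> hne [x [Lx [n h]]]; split=> //.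
have Lz := L_shiftZ n Lx; exists 0, (mkV 0 Lz); apply: up_path => i hi.
rewrite /shiftZ add0n Z.add_comm h //; exact: set_nth_default.
Qed.

Lemma WLm_iff w : W_Lm (canonical_pair L) w <-> admissible L w.
Proof.
split.
  case=> hne [l [u hp]]; split=> //.
  have [n [v H]] := pathM_down hp.
  have [x [Lx Wx]] := canV_rep v.
  have hs : memS (val v) (pref x n) by rewrite -Wx; exact: W_self.
  have := proj1 (H _) hs; have [z [Lz Wz]] := canV_rep u.
  rewrite -Wz => /memW [hsz Ly].
  exists (fs z (w ++ pref x n)); split=> //; exists 0%Z => i hi.
  rewrite Z.add_0_l (@fs_in _ _ _ (fs z (w ++ pref x n) 0%Z)); last first.
    rewrite size_cat; lia.
  by rewrite nth_cat hi.
case=> hne [x [Lx [n h]]]; split=> //.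
have Lz := L_shiftZ n Lx; exists (size w), (mkV (size w) Lz); apply: down_path => i hi.
rewrite /shiftZ Z.add_comm h //; exact: set_nth_default.
Qed.

Lemma main_thm :
  is_lambda_graph_bisystem (canonical_pair L) /\
  FPCC (canonical_pair L) /\
  (forall w : seq Sigma, W_Lp (canonical_pair L) w <-> admissible L w) /\
  (forall w : seq Sigma, W_Lm (canonical_pair L) w <-> admissible L w).
Proof.
have [[x0 Lx0] _] := HL.
split; last split; last split; [| | exact: WLp_iff | exact: WLm_iff].
  split; first by move=> l; exists (mkV l Lx0).
  split.
    move=> l v; have [x [Lx Wx]] := canV_rep v.
    split; first exact: hasEmIn.
    split; first by exists (x 0%Z), (mkV l (L_shiftZ 1 Lx)); apply: Em_of.
    split; first exact: hasEpOut.
    by exists (mkV l Lx), (x (Z.of_nat l)); apply: Ep_of.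
  split.
    move=> v; split; [exact: hasEmIn | exact: hasEpOut].
  split; first exact: Em_res.
  split; first exact: Ep_res.
  exact: local_prop.
split.
  apply: (@eq_card1 _ (mkV 0 Lx0)) => u; rewrite !inE; apply/esym/eqP; exact: V0_all.
move=> l u w; rewrite FwC PwC //.
Qed.

End Main.

Theorem proposition5p4 (Sigma : finType) (L : zseq Sigma -> Prop) :
  is_subshift L ->
  is_lambda_graph_bisystem (canonical_pair L) /\
  FPCC (canonical_pair L) /\
  (forall w : seq Sigma, W_Lp (canonical_pair L) w <-> admissible L w) /\
  (forall w : seq Sigma, W_Lm (canonical_pair L) w <-> admissible L w).
Proof. move=> HL; exact: main_thm. Qed.
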